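(* Let $v \in \mathbb{R}^n$ be a zero-mean subgaussian random variable with variance proxy $R \succeq 0$. Then for any symmetric positive definite matrix $H \in \mathbb{R}^{n\times n}$ and any vector $x \in \mathbb{R}^n$, $$\frac{1}{\sqrt{|H+R|}}\, \mathbb{E}\left[e^{\frac12 \|x+v\|^2_{(H+R)^{-1}}}\right] \le \frac{1}{\sqrt{|H|}}\, e^{\frac12 \|x\|^2_{H^{-1}}}.$$
   Context: A zero-mean random variable $w \in \mathbb{R}^n$ is subgaussian with variance proxy $Q \succeq 0$ (a symmetric positive semidefinite matrix) if $\mathbb{E}[e^{\nu^\top w}] \le e^{\frac12 \nu^\top Q \nu}$ for all $\nu \in \mathbb{R}^n$. For a symmetric positive definite $A$, $\|x\|_A^2 = x^\top A x$; $|A|$ denotes the determinant. *)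

(* Defs.v *)
From HB Require Import structures.
From mathcomp Require Import all_boot all_order all_algebra.
From mathcomp Require Import all_classical all_reals all_analysis.
Set Implicit Arguments. Unset Strict Implicit. Unset Printing Implicit Defensive.
Import Order.TTheory GRing.Theory Num.Theory.
Local Open Scope ring_scope.
Local Open Scope classical_set_scope.

Definition qform (R : realType) (n : nat) (A : 'M[R]_n) (x : 'cV[R]_n) : R :=
  (x^T *m A *m x) ord0 ord0.

Definition sym_psd (R : realType) (n : nat) (A : 'M[R]_n) : Prop :=
  A^T = A /\ forall y : 'cV[R]_n, 0 <= qform A y.

Definition sym_pd (R : realType) (n : nat) (A : 'M[R]_n) : Prop :=
  A^T = A /\ forall y : 'cV[R]_n, y != 0 -> 0 < qform A y.

Definition dotv (R : realType) (n : nat) (a b : 'cV[R]_n) : R :=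
  (a^T *m b) ord0 ord0.

Definition subgaussian (R : realType) (d : measure_display) (T : measurableType d)
  (P : probability T R) (n : nat) (v : T -> 'cV[R]_n) (Q : 'M[R]_n) : Prop :=
  (forall i : 'I_n, measurable_fun setT (fun w => v w i ord0)) /\
  (forall i : 'I_n, P.-integrable setT (fun w => (v w i ord0)%:E)) /\
  (forall i : 'I_n, (\int[P]_w (v w i ord0)%:E = 0)%E) /\
  (forall nu : 'cV[R]_n,
     (\int[P]_w (expR (dotv nu (v w)))%:E <= (expR (2^-1 * qform Q nu))%:E)%E).

(* Main.v *)
Require Import Defs.
From HB Require Import structures.
From mathcomp Require Import all_boot all_order all_algebra.
From mathcomp Require Import all_classical all_reals all_analysis.
From mathcomp Require Import measurable_realfun.
From mathcomp Require Import ring lra.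
Set Implicit Arguments. Unset Strict Implicit. Unset Printing Implicit Defensive.
Import Order.TTheory GRing.Theory Num.Theory.
Local Open Scope ring_scope.

Section Alg.
Variable (R : rcfType) (n : nat).
Implicit Types (a b c x y z u : 'cV[R]_n) (A B C : 'M[R]_n).

Definition dt a b : R := (a^T *m b) 0 0.
Definition qf A x : R := (x^T *m A *m x) 0 0.

Lemma qfE A x : qf A x = dt x (A *m x).
Proof. by rewrite /qf /dt mulmxA. Qed.

Lemma dtE a b : dt a b = \sum_i a i 0 * b i 0.
Proof. by rewrite /dt mxE; apply: eq_bigr => i _; rewrite mxE. Qed.

Lemma dtC a b : dt a b = dt b a.
Proof. by rewrite !dtE; apply: eq_bigr => i _; rewrite mulrC. Qed.

Lemma dtDl a b c : dt (a + b) c = dt a c + dt b c.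
Proof. by rewrite !dtE -big_split; apply: eq_bigr => i _; rewrite mxE mulrDl. Qed.
Lemma dtDr a b c : dt c (a + b) = dt c a + dt c b.
Proof. by rewrite dtC dtDl !(dtC c). Qed.
Lemma dtZl k a b : dt (k *: a) b = k * dt a b.
Proof. by rewrite !dtE mulr_sumr; apply: eq_bigr => i _; rewrite mxE mulrA. Qed.
Lemma dtZr k a b : dt a (k *: b) = k * dt a b.
Proof. by rewrite dtC dtZl dtC. Qed.
Lemma dtNl a b : dt (- a) b = - dt a b.
Proof. by rewrite -scaleN1r dtZl mulN1r. Qed.
Lemma dtNr a b : dt a (- b) = - dt a b.
Proof. by rewrite -scaleN1r dtZr mulN1r. Qed.
Lemma dtBl a b c : dt (a - b) c = dt a c - dt b c.
Proof. by rewrite dtDl dtNl. Qed.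
Lemma dtBr a b c : dt c (a - b) = dt c a - dt c b.
Proof. by rewrite dtDr dtNr. Qed.
Lemma dt0l b : dt 0 b = 0.
Proof. by rewrite dtE big1 // => i _; rewrite mxE mul0r. Qed.
Lemma dt0r b : dt b 0 = 0.
Proof. by rewrite dtC dt0l. Qed.
Lemma dt_mul a A b : dt a (A *m b) = dt (A^T *m a) b.
Proof. by rewrite /dt trmx_mul trmxK mulmxA. Qed.
Lemma dt_addmx a A B b : dt a ((A + B) *m b) = dt a (A *m b) + dt a (B *m b).
Proof. by rewrite mulmxDl dtDr. Qed.

Lemma dt_self_ge0 a : 0 <= dt a a.
Proof. by rewrite dtE; apply: sumr_ge0 => i _; rewrite -expr2 sqr_ge0. Qed.

Lemma dt_self_eq0 a : dt a a = 0 -> a = 0.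
Proof.
rewrite dtE => /eqP; rewrite psumr_eq0; last by move=> i _; rewrite -expr2 sqr_ge0.
move=> /allP H; apply/matrixP => i j; rewrite (ord1 j) mxE.
have := H i (mem_index_enum _); rewrite -expr2 sqrf_eq0 => /eqP //.
Qed.

Lemma dt_rank1 x a b y : dt x ((a *m b^T) *m y) = dt x a * dt b y.
Proof.
rewrite -mulmxA [b^T *m y]mx11_scalar -/(dt b y) mul_mx_scalar dtZr mulrC //.
Qed.

Lemma qf_sym_add A x y : A^T = A ->
  qf A (x + y) = qf A x + 2 * dt x (A *m y) + qf A y.
Proof.
move=> sA; rewrite !qfE mulmxDr !dtDl !dtDr.
have -> : dt y (A *m x) = dt x (A *m y) by rewrite dtC dt_mul sA.
ring.
Qed.

Lemma qfZ A k x : qf A (k *: x) = k ^+ 2 * qf A x.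
Proof. by rewrite !qfE -scalemxAr dtZl dtZr mulrA expr2. Qed.

Lemma qfD A B x : qf (A + B) x = qf A x + qf B x.
Proof. by rewrite !qfE dt_addmx. Qed.

Lemma qf_rank1 a x : qf (a *m a^T) x = dt a x ^+ 2.
Proof. by rewrite qfE dt_rank1 dtC expr2. Qed.

Lemma quad_nonneg_disc (p q r : R) :
  (forall t, 0 <= p + 2 * t * q + t ^+ 2 * r) -> q ^+ 2 <= p * r.
Proof.
move=> H; have p0 : 0 <= p.
  by have := H 0; rewrite !(mulr0, mul0r, expr0n, addr0).
have [r0|r0] := ltP 0 r.
  have Ht := H (- q / r).
  have e : p + 2 * (- q / r) * q + (- q / r) ^+ 2 * r = p - q ^+ 2 / r.
    by field; rewrite gt_eqF.
  rewrite e subr_ge0 in Ht.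
  have r0n : r != 0 by rewrite gt_eqF.
  rewrite -(divfK r0n (q ^+ 2)); by rewrite ler_wpM2r // ltW.
have rge0 : 0 <= r.
  rewrite leNgt; apply/negP => rn.
  pose t := (p + 1) / (- r) + 1.
  have t1 : 1 <= t by rewrite /t lerDr divr_ge0 // ?oppr_ge0 ?ltW //; lra.
  have tr : t * r = - (p + 1) + r by rewrite /t; field; rewrite lt_eqF.
  have h1 := H t; have h2 := H (- t).
  have h3 : t ^+ 2 * r <= t * r by rewrite expr2; nra.
  have e : (- t) ^+ 2 = t ^+ 2 by rewrite sqrrN.
  rewrite e in h2; nra.
have r0' : r = 0 by apply/le_anti; rewrite r0 rge0.
have [q0|q0] := eqVneq q 0.
  by rewrite q0 r0' expr0n mulr0.
exfalso.
have Ht := H (- (p + 1) / (2 * q)).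
have e : 2 * (- (p + 1) / (2 * q)) * q = - (p + 1) by field.
rewrite e in Ht.
have h : (- (p + 1) / (2 * q)) ^+ 2 * r <= 0 by rewrite mulr_ge0_le0 // sqr_ge0.
lra.
Qed.

Definition psd A := A^T = A /\ forall y, 0 <= qf A y.

Lemma CS A u y : psd A -> dt u (A *m y) ^+ 2 <= qf A u * qf A y.
Proof.
move=> [sA pA]; apply: quad_nonneg_disc => t.
have := pA (u + t *: y); rewrite qf_sym_add // qfZ -scalemxAr dtZr.
by rewrite [qf A u + _]addrC; congr (0 <= _); ring.
Qed.


Definition ev (i : 'I_n) : 'cV[R]_n := delta_mx i 0.

Lemma dt_evl i b : dt (ev i) b = b i 0.
Proof. by rewrite /dt /ev trmx_delta -rowE mxE. Qed.

Lemma mul_ev A i : A *m ev i = col i A.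
Proof. by rewrite colE. Qed.

Lemma dt_ev A i j : dt (ev i) (A *m ev j) = A i j.
Proof. by rewrite dt_evl mul_ev !mxE. Qed.

Lemma qf_ev A i : qf A (ev i) = A i i.
Proof. by rewrite qfE dt_ev. Qed.

Lemma psd_diag_ge0 A i : psd A -> 0 <= A i i.
Proof. by move=> [_ pA]; rewrite -qf_ev. Qed.

Lemma psd_diag0 A i j : psd A -> A i i = 0 -> A i j = 0.
Proof.
move=> pA Aii; have := CS (ev i) (ev j) pA; rewrite dt_ev !qf_ev Aii mul0r.
by move=> h; apply/eqP; rewrite -sqrf_eq0 eq_le h sqr_ge0.
Qed.

Lemma rank1_sym a : (a *m a^T)^T = a *m a^T.
Proof. by rewrite trmx_mul trmxK. Qed.

Lemma rank1E a j k : (a *m a^T) j k = a j 0 * a k 0.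
Proof. by rewrite mxE big_ord1 mxE. Qed.

Lemma qfN A x : qf (- A) x = - qf A x.
Proof. by rewrite !qfE mulNmx dtNr. Qed.

Lemma qfB A B x : qf (A - B) x = qf A x - qf B x.
Proof. by rewrite qfD qfN. Qed.

Lemma sym_add A B : A^T = A -> B^T = B -> (A + B)^T = A + B.
Proof. by move=> sA sB; rewrite linearD /= sA sB. Qed.
Lemma sym_sub A B : A^T = A -> B^T = B -> (A - B)^T = A - B.
Proof. by move=> sA sB; rewrite linearB /= sA sB. Qed.

Lemma entryB A B j k : (A - B) j k = A j k - B j k.
Proof. by rewrite !mxE. Qed.

Definition supp A := [set i | A i i != 0].

Section Decomp.
Variables (A : 'M[R]_n) (i : 'I_n).
Hypothesis pA : psd A.
Hypothesis Aii : 0 < A i i.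
Let a := (Num.sqrt (A i i))^-1 *: (A *m ev i).

Lemma dt_a y : dt a y ^+ 2 = dt (ev i) (A *m y) ^+ 2 / A i i.
Proof.
rewrite dtZl dtC dt_mul pA.1 exprMn exprVn sqr_sqrtr ?ltW // mulrC.
by rewrite dtC.
Qed.

Lemma decomp_psd : psd (A - a *m a^T).
Proof.
split; first by apply: sym_sub; [exact: pA.1|exact: rank1_sym].
move=> y; rewrite qfB qf_rank1 dt_a subr_ge0 ler_pdivrMr //.
by rewrite -qf_ev mulrC; exact: CS.
Qed.

Lemma decomp_supp : supp (A - a *m a^T) \proper supp A.
Proof.
have aE j : a j 0 = (Num.sqrt (A i i))^-1 * A j i by rewrite /a mul_ev !mxE.
apply/properP; split.
  apply/fintype.subsetP => j; rewrite !inE; apply: contra => /eqP Ajj.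
  by rewrite entryB rank1E !aE (@psd_diag0 A j i pA Ajj) !mulr0 subr0 Ajj.
exists i; first by rewrite inE gt_eqF.
rewrite inE negbK entryB rank1E aE mulrACA -expr2 exprVn sqr_sqrtr ?ltW //.
have h : A i i != 0 by rewrite gt_eqF.
by apply/eqP; field.
Qed.

End Decomp.

Lemma psd_zero A : psd A -> supp A = finset.set0 -> A = 0.
Proof.
move=> pA s0; apply/matrixP => j k; rewrite mxE; apply: psd_diag0 pA _.
by apply/eqP; move/setP: s0 => /(_ j); rewrite !inE => /negbFE.
Qed.

Lemma psd_induct (Q : 'M[R]_n -> Prop) :
  Q 0 ->
  (forall A' a, psd A' -> psd (A' + a *m a^T) -> Q A' -> Q (A' + a *m a^T)) ->
  forall A, psd A -> Q A.
Proof.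
move=> Q0 Qstep A; move Hk : #|supp A| => k.
elim: k {-2}k (leqnn k) A Hk => [|k IH] k' Hk' A Hk pA.
  have : supp A = finset.set0 by apply/eqP; rewrite -(cards_eq0 (supp A)) Hk; case: k' Hk' {Hk}.
  by move/(psd_zero pA) ->.
have [s0|[i]] := set_0Vmem (supp A).
  by rewrite (psd_zero pA s0).
rewrite inE => Aii0.
have Aii : 0 < A i i by rewrite lt_def Aii0 psd_diag_ge0.
set a := (Num.sqrt (A i i))^-1 *: (A *m ev i).
have -> : A = (A - a *m a^T) + a *m a^T by rewrite subrK.
apply: Qstep; first exact: decomp_psd.
  by rewrite subrK.
apply: (IH #|supp (A - a *m a^T)|) => //; last exact: decomp_psd.
have := proper_card (decomp_supp pA Aii); rewrite Hk.
move=> h; rewrite -ltnS; exact: leq_trans h Hk'.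
Qed.


Definition pd A := A^T = A /\ forall y, y != 0 -> 0 < qf A y.

Lemma pd_psd A : pd A -> psd A.
Proof.
move=> [sA pA]; split => // y; have [->|y0] := eqVneq y 0.
  by rewrite qfE dt0l.
exact/ltW/pA.
Qed.

Lemma pd_unit A : pd A -> A \in unitmx.
Proof.
move=> [sA pA]; rewrite unitmxE unitfE; apply/negP => /det0P [v v0 vA].
have y0 : v^T != 0 by rewrite trmx_eq0.
have := pA _ y0; rewrite /qf trmxK vA mul0mx mxE ltxx //.
Qed.

Lemma sym_inv A : A^T = A -> (invmx A)^T = invmx A.
Proof. by move=> sA; rewrite trmx_inv sA. Qed.

End Alg.

Lemma det_1_rank1 (R : comNzRingType) (n : nat) (p : 'cV[R]_n) (q : 'rV[R]_n) :
  \det (1%:M + p *m q) = 1 + (q *m p) 0 0.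
Proof.
pose B := block_mx (1%:M : 'M[R]_n) (- p) q (1%:M : 'M[R]_1).
have e1 : B = block_mx 1%:M 0 q 1%:M *m block_mx 1%:M (- p) 0 (1%:M + q *m p).
  rewrite mulmx_block !(mul1mx, mulmx1, mul0mx, mulmx0, addr0, add0r).
  by rewrite mulmxN addrCA addNr addr0.
have e2 : B = block_mx (1%:M + p *m q) (- p) 0 1%:M *m block_mx 1%:M 0 q 1%:M.
  rewrite mulmx_block !(mul1mx, mulmx1, mul0mx, mulmx0, addr0, add0r).
  by rewrite mulNmx addrK.
have := congr1 determinant e2; rewrite {1}e1 !det_mulmx.
rewrite !det_ublock !det_lblock !det1 !mul1r !mulr1.
by rewrite det_mx11 !mxE eqxx /= => <-.
Qed.

Section Alg2.
Variable (R : rcfType) (n : nat).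
Implicit Types (a b c x y z u w : 'cV[R]_n) (A B C M : 'M[R]_n).

Lemma det_rank1_update M w a : M \in unitmx ->
  \det (M - w *m a^T) = \det M * (1 - dt a (invmx M *m w)).
Proof.
move=> uM.
have -> : M - w *m a^T = M *m (1%:M + (- (invmx M *m w)) *m a^T).
  by rewrite mulmxDr mulmx1 mulNmx mulmxN !mulmxA mulmxV // mul1mx.
by rewrite det_mulmx det_1_rank1 mulmxN mxE /dt -/(dt _ _) [in RHS]/dt.
Qed.

Lemma qf_sym_sub A x y : A^T = A ->
  qf A (x - y) = qf A x - 2 * dt x (A *m y) + qf A y.
Proof.
move=> sA; rewrite qf_sym_add // -scaleN1r qfZ -scalemxAr dtZr; ring.
Qed.

Section Key.
Variables (H Rm : 'M[R]_n).
Hypotheses (pH : pd H) (pR : psd Rm).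
Let S := H + Rm.
Let Si := invmx S.

Lemma pdS : pd S.
Proof.
split; first by apply: sym_add; [exact: pH.1|exact: pR.1].
move=> y y0; rewrite /S qfD; apply: ltr_wpDr; [exact: pR.2|exact: pH.2].
Qed.

Lemma uS : S \in unitmx. Proof. exact: pd_unit pdS. Qed.

Lemma key z : qf Si (Rm *m z) + qf H (Si *m (Rm *m z)) <= qf Rm z.
Proof.
set w := Si *m (Rm *m z).
have Sw : S *m w = Rm *m z by rewrite /w mulKVmx // uS.
have e1 : qf Si (Rm *m z) = qf S w.
  by rewrite !qfE -/w -Sw dtC.
have e2 : dt z (Rm *m w) = qf S w.
  by rewrite dt_mul pR.1 -Sw qfE dtC.
have := pR.2 (z - w); rewrite qf_sym_sub ?pR.1 // e2 e1 /S qfD.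
lra.
Qed.

Lemma key_lt z : Rm *m z != 0 -> qf Si (Rm *m z) < qf Rm z.
Proof.
move=> Rz0; apply: lt_le_trans (key z); rewrite ltrDl; apply: pH.2.
apply: contra Rz0 => /eqP w0.
by rewrite -(mulKVmx uS (Rm *m z)) -/Si w0 mulmx0.
Qed.

Lemma key_le z : qf Si (Rm *m z) <= qf Rm z.
Proof.
apply: le_trans (key z); rewrite lerDl; exact: (pd_psd pH).2.
Qed.

End Key.

End Alg2.

Section Step.
Variable (R : rcfType) (n : nat).
Variables (Rm A' C' : 'M[R]_n) (a m' x : 'cV[R]_n).
Hypotheses (sR : Rm^T = Rm) (sA : A'^T = A') (sC : C'^T = C').
Variable M' : 'M[R]_n.
Hypothesis eM : M' = 1%:M - Rm *m A'.
Hypotheses (hC : M' *m C' = Rm) (hm : M' *m m' = x).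
Let c := C' *m a.
Let al := dt a c.
Let be := dt a m'.

Lemma Mc' : M' *m c = Rm *m a.
Proof. by rewrite /c mulmxA hC. Qed.

Lemma qfZm (k : R) (B : 'M[R]_n) y : qf (k *: B) y = k * qf B y.
Proof. by rewrite !qfE -scalemxAl dtZr. Qed.

Lemma alpha_lt1 (Si : 'M[R]_n) :
  (forall u, qf (A' + a *m a^T) u <= qf Si u) ->
  (forall z, Rm *m z != 0 -> qf Si (Rm *m z) < qf Rm z) -> al < 1.
Proof.
move=> hL hK.
have Mc : c - Rm *m (A' *m c) = Rm *m a.
  by rewrite -Mc' eM mulmxBl mul1mx mulmxA.
have cE : c = Rm *m (a + A' *m c).
  by rewrite mulmxDr -Mc subrK.
have [c0|c0] := eqVneq c 0.
  by rewrite /al c0 dt0r ltr01.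
have h1 := hL c.
rewrite qfD qf_rank1 -/al in h1.
have h2 := hK (a + A' *m c); rewrite -cE in h2.
have h3 := h2 c0.
have e : qf Rm (a + A' *m c) = al + qf A' c.
  by rewrite qfE -cE dtDl -/al qfE dtC.
rewrite e in h3.
have : (dt a c) ^+ 2 < al by rewrite -/al; lra.
rewrite -/al => h; nra.
Qed.

Let ga := 1 - al.
Hypothesis ga0 : ga != 0.
Let C := C' + ga^-1 *: (c *m c^T).
Let m := m' + (be / ga) *: c.
Let A := A' + a *m a^T.
Let M := 1%:M - Rm *m A.

Lemma ME : M = M' - (Rm *m a) *m a^T.
Proof. by rewrite /M eM /A mulmxDr mulmxA opprD addrA. Qed.


Lemma aTC : a^T *m C' = c^T.
Proof. by rewrite /c trmx_mul sC. Qed.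

Lemma aTc : a^T *m c = al%:M.
Proof. by rewrite [LHS]mx11_scalar. Qed.

Lemma aTm : a^T *m m' = be%:M.
Proof. by rewrite [LHS]mx11_scalar. Qed.

Lemma C_sym : C^T = C.
Proof. by rewrite /C linearD /= sC linearZ /= trmx_mul trmxK. Qed.

Lemma MC : M *m C = Rm.
Proof.
rewrite ME /C mulmxDr !mulmxBl hC -!scalemxAr.
rewrite [M' *m (c *m c^T)]mulmxA Mc'.
rewrite -[Rm *m a *m a^T *m C']mulmxA aTC.
rewrite -[Rm *m a *m a^T *m (c *m c^T)]mulmxA [a^T *m (c *m c^T)]mulmxA aTc.
rewrite mul_scalar_mx -scalemxAr.
set N := Rm *m a *m c^T.
rewrite scalerA -scalerBl.
have -> : ga^-1 - ga^-1 * al = 1 by rewrite /ga; field.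
by rewrite scale1r subrK.
Qed.

Lemma Mm : M *m m = x.
Proof.
rewrite ME /m mulmxDr !mulmxBl hm -!scalemxAr Mc'.
rewrite -[Rm *m a *m a^T *m m']mulmxA aTm mul_mx_scalar.
rewrite -[Rm *m a *m a^T *m c]mulmxA aTc mul_mx_scalar.
set N := Rm *m a.
rewrite scalerA -scalerBl.
have -> : be / ga - be / ga * al = be by rewrite /ga; field.
by rewrite subrK.
Qed.

Lemma detMupd : M' \in unitmx -> \det M = \det M' * ga.
Proof.
move=> uM; rewrite ME det_rank1_update //; congr (_ * (1 - _)).
by rewrite -Mc' mulKmx.
Qed.

Lemma xAm : dt x (A *m m) = dt x (A' *m m') + be ^+ 2 / ga.
Proof.
have h1 : dt x (A' *m c) + dt a x = be.
  have e1 : C' *m A' *m x = Rm *m A' *m m'.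
    have eT : M'^T = 1%:M - A' *m Rm by rewrite eM linearB /= trmx1 trmx_mul sR sA.
    have eCM : C' *m M'^T = Rm by rewrite -[C' in LHS]sC -trmx_mul hC sR.
    have AM : A' *m M' = M'^T *m A'.
      by rewrite eT eM mulmxBr mulmx1 mulmxBl mul1mx mulmxA.
    by rewrite -hm mulmxA -[C' *m A' *m M']mulmxA AM mulmxA eCM.
  have e2 : m' = x + Rm *m A' *m m'.
    by rewrite -hm eM mulmxBl mul1mx subrK.
  rewrite /c mulmxA dt_mul trmx_mul sC sA e1 /be {2}e2 dtDr.
  by rewrite (dtC (Rm *m A' *m m')) addrC.
rewrite /A /m mulmxDl !mulmxDr !dtDr -!scalemxAr !dtZr !dt_rank1 -/be -/al.
rewrite -addrA; congr (_ + _).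
have h2 : dt x (A' *m c) = be - dt a x by rewrite -h1 addrK.
rewrite h2 (dtC x a).
rewrite /ga; field.
exact: ga0.
Qed.

Lemma expo1 (nu : 'cV[R]_n) (g : R) :
  dt (nu + g *: a) m' + 2^-1 * qf C' (nu + g *: a) =
  (dt nu m' + 2^-1 * qf C' nu) + g * (be + dt c nu) + 2^-1 * al * g ^+ 2.
Proof.
rewrite dtDl dtZl qf_sym_add // qfZ -scalemxAr dtZr -/c (dtC nu c) -/be.
rewrite [qf C' a]qfE -/c -/al.
by field.
Qed.

Lemma expo2 (nu : 'cV[R]_n) :
  dt nu m' + 2^-1 * qf C' nu + 2^-1 * ((be + dt c nu) ^+ 2 / ga) =
  2^-1 * (be ^+ 2 / ga) + (dt nu m + 2^-1 * qf C nu).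
Proof.
rewrite /m /C dtDr dtZr qfD qfZm qf_rank1 (dtC nu c).
by field; exact: ga0.
Qed.

End Step.

Section Core.
Variable (R : rcfType) (n : nat).
Variables (H Rm : 'M[R]_n) (x : 'cV[R]_n).
Hypotheses (pH : pd H) (pR : psd Rm).
Let Si := invmx (H + Rm).

Definition AlgInv (A : 'M[R]_n) (m : 'cV[R]_n) (C : 'M[R]_n) :=
  [/\ A^T = A, C^T = C, (1%:M - Rm *m A) *m C = Rm,
      (1%:M - Rm *m A) *m m = x & 0 < \det (1%:M - Rm *m A)].

Variable Bnd : 'M[R]_n -> 'cV[R]_n -> 'M[R]_n -> Prop.
Hypothesis B0 : Bnd 0 x Rm.
Hypothesis Bstep : forall A' a m' C', AlgInv A' m' C' -> psd A' ->
  dt a (C' *m a) < 1 -> Bnd A' m' C' ->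
  Bnd (A' + a *m a^T) (m' + (dt a m' / (1 - dt a (C' *m a))) *: (C' *m a))
      (C' + (1 - dt a (C' *m a))^-1 *: ((C' *m a) *m (C' *m a)^T)).

Theorem core A : psd A -> (forall u, qf A u <= qf Si u) ->
  exists m C, AlgInv A m C /\ Bnd A m C.
Proof.
move: A; apply: psd_induct.
  move=> _; exists x, Rm; split => //; split.
  - by rewrite trmx0.
  - exact: pR.1.
  - by rewrite mulmx0 subr0 mul1mx.
  - by rewrite mulmx0 subr0 mul1mx.
  - by rewrite mulmx0 subr0 det1 ltr01.
move=> A' a pA' pA IH hL.
have hL' : forall u, qf A' u <= qf Si u.
  move=> u; apply: le_trans (hL u); rewrite qfD qf_rank1 lerDl sqr_ge0 //.
have [m' [C' [[sA sC hC hm dpos] hB]]] := IH hL'.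
have uM : (1%:M - Rm *m A') \in unitmx by rewrite unitmxE unitfE gt_eqF.
have al1 : dt a (C' *m a) < 1.
  exact: (alpha_lt1 (M' := 1%:M - Rm *m A') (erefl _) hC hL (key_lt pH pR)).
have ga0 : 1 - dt a (C' *m a) != 0 by rewrite subr_eq0 eq_sym lt_eqF.
exists (m' + (dt a m' / (1 - dt a (C' *m a))) *: (C' *m a)).
exists (C' + (1 - dt a (C' *m a))^-1 *: ((C' *m a) *m (C' *m a)^T)).
split; last exact: Bstep.
split.
- exact: pA.1.
- exact: C_sym sC.
- exact: (MC (M' := 1%:M - Rm *m A') sC (erefl _) hC ga0).
- exact: (Mm (M' := 1%:M - Rm *m A') (erefl _) hC hm ga0).
- rewrite (detMupd a (M' := 1%:M - Rm *m A') (erefl _) hC uM).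
  by rewrite mulr_gt0 // subr_gt0.
Qed.

End Core.

Section Det.
Variable (R : rcfType) (n : nat).

Lemma psd_inv (S : 'M[R]_n) : pd S -> psd (invmx S).
Proof.
move=> pS; split; first exact: sym_inv pS.1.
move=> u; have uS := pd_unit pS.
have -> : qf (invmx S) u = qf S (invmx S *m u).
  by rewrite !qfE mulKVmx // {1}(_ : u = S *m (invmx S *m u)) ?mulKVmx // dtC.
exact: (pd_psd pS).2.
Qed.

Lemma pd1 : pd (1%:M : 'M[R]_n).
Proof.
split; first exact: trmx1.
move=> y y0; rewrite qfE mul1mx lt_def dt_self_ge0 andbT.
by apply: contra y0 => /eqP /dt_self_eq0 ->.
Qed.

Lemma ratio_pos (H Rm : 'M[R]_n) : pd H -> psd Rm -> 0 < \det H / \det (H + Rm).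
Proof.
move=> pH pR.
have pS : pd (H + Rm) by exact: pdS.
have uS := pd_unit pS.
have [m [C [[_ _ _ _ dpos] _]]] :=
  @core R n H Rm 0 pH pR (fun _ _ _ => True) I (fun _ _ _ _ _ _ _ _ => I)
    (invmx (H + Rm)) (psd_inv pS) (fun u => lexx _).
have e : 1%:M - Rm *m invmx (H + Rm) = H *m invmx (H + Rm).
  have h : (H + Rm) *m invmx (H + Rm) = 1%:M by rewrite mulmxV.
  by rewrite -h mulmxDl addrK.
by rewrite e det_mulmx det_inv in dpos.
Qed.

Lemma pd_det_gt0 (Q : 'M[R]_n) : pd Q -> 0 < \det Q.
Proof.
move=> pQ.
have h1 := ratio_pos pd1 (pd_psd pQ).
rewrite det1 mul1r invr_gt0 in h1.
have h2 := ratio_pos pQ (pd_psd pd1).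
rewrite addrC in h2.
have h0 : \det (1%:M + Q) != 0 by rewrite gt_eqF.
by rewrite -(divfK h0 (\det Q)) mulr_gt0.
Qed.

End Det.

Local Open Scope classical_set_scope.

Section Gauss.
Variable R : realType.

Lemma gauss1 (al be : R) : al < 1 ->
  (\int[lebesgue_measure]_g (expR (be * g + 2^-1 * al * g ^+ 2) * normal_pdf 0 1 g)%:E
   = ((Num.sqrt (1 - al))^-1 * expR (2^-1 * (be ^+ 2 / (1 - al))))%:E)%E.
Proof.
move=> al1.
set ga := 1 - al.
have ga0 : 0 < ga by rewrite /ga subr_gt0.
set sg := Num.sqrt (ga^-1).
have sg0 : sg != 0 by rewrite /sg gt_eqF // sqrtr_gt0 invr_gt0.
set mu := be / ga.
set c := (Num.sqrt ga)^-1 * expR (2^-1 * (be ^+ 2 / ga)).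
have c0 : 0 <= c by rewrite /c mulr_ge0 ?invr_ge0 ?sqrtr_ge0 ?expR_ge0.
have sq0 : 0 < Num.sqrt ga by rewrite sqrtr_gt0.
have pw g : expR (be * g + 2^-1 * al * g ^+ 2) * normal_pdf 0 1 g = c * normal_pdf mu sg g.
  rewrite /normal_pdf (negbTE sg0) oner_eq0 /normal_peak /normal_fun.
  have sgE : sg ^+ 2 = ga^-1 by rewrite /sg sqr_sqrtr // invr_ge0 ltW.
  rewrite sgE expr1n mul1r.
  have -> : Num.sqrt (ga^-1 * pi *+ 2) = (Num.sqrt ga)^-1 * Num.sqrt (pi *+ 2).
    by rewrite -mulrnAr sqrtrM ?invr_ge0 ?ltW // sqrtrV // ltW.
  rewrite invfM invrK /c.
  rewrite mulrCA -expRD.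
  rewrite [RHS](_ : _ = (Num.sqrt (pi *+ 2))^-1 * (expR (2^-1 * (be ^+ 2 / ga)) *
      expR (- (g - mu) ^+ 2 / (ga^-1 *+ 2)))); last first.
    by field; rewrite !gt_eqF // sqrtr_gt0 pmulrn_lgt0 // pi_gt0.
  rewrite -expRD.
  congr (_ * expR _).
  rewrite /mu /ga; field.
  by rewrite -/ga gt_eqF.
under eq_integral do rewrite pw EFinM.
rewrite ge0_integralZl //.
- by rewrite integral_normal_pdf mule1.
- by apply/measurable_EFinP; exact: measurable_normal_pdf.
- by move=> g _; rewrite lee_fin normal_pdf_ge0.
Qed.


Section Mix.
Variables (d : measure_display) (T : measurableType d) (P : probability T R).
Variables (f1 f2 : T -> R).
Hypotheses (mf1 : measurable_fun setT f1) (mf2 : measurable_fun setT f2).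

Let F (z : T * R) : \bar R :=
  (expR (f1 z.1 + z.2 * f2 z.1) * normal_pdf 0 1 z.2)%:E.

Let mF : measurable_fun setT F.
Proof.
apply/measurable_EFinP; apply: measurable_funM.
  apply: measurableT_comp; first exact: measurable_expR.
  apply: measurable_funD; first exact: measurableT_comp mf1 measurable_fst.
  apply: measurable_funM; first exact: measurable_snd.
  exact: measurableT_comp mf2 measurable_fst.
exact: measurableT_comp (measurable_normal_pdf 0 1) measurable_snd.
Qed.

Let F0 z : (0 <= F z)%E.
Proof. by rewrite lee_fin mulr_ge0 ?expR_ge0 ?normal_pdf_ge0. Qed.

Lemma mix_meas : measurable_fun setT
  (fun g : R => \int[P]_w (expR (f1 w + g * f2 w) * normal_pdf 0 1 g)%:E)%E.
Proof. exact: (measurable_fun_fubini_tonelli_G (m1 := P) F mF F0). Qed.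

Lemma mix :
  (\int[P]_w (expR (f1 w + 2^-1 * f2 w ^+ 2))%:E =
   \int[lebesgue_measure]_g \int[P]_w (expR (f1 w + g * f2 w) * normal_pdf 0 1 g)%:E)%E.
Proof.
have pw w : (expR (f1 w + 2^-1 * f2 w ^+ 2))%:E =
    (\int[lebesgue_measure]_g (expR (f1 w + g * f2 w) * normal_pdf 0 1 g)%:E)%E.
  have := @gauss1 0 (f2 w) ltr01.
  rewrite subr0 sqrtr1 invr1 mul1r mulr1 => h.
  under eq_integral do rewrite expRD -mulrA EFinM.
  have mg : measurable_fun setT (fun g : R => (expR (g * f2 w) * normal_pdf 0 1 g)%:E).
    apply/measurable_EFinP; apply: measurable_funM; last exact: measurable_normal_pdf.
    apply: measurableT_comp; first exact: measurable_expR.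
    exact: mulrr_measurable.
  have f0 : forall g, [set: R] g -> (0 <= (expR (g * f2 w) * normal_pdf 0 1 g)%:E)%E.
    by move=> g _; rewrite lee_fin mulr_ge0 ?expR_ge0 ?normal_pdf_ge0.
  have k0 : (0 <= (expR (f1 w))%:E)%E by rewrite lee_fin expR_ge0.
  rewrite ge0_integralZl //.
  rewrite expRD EFinM; congr (_ * _)%E; rewrite -h.
  by apply: eq_integral => g _; congr ((expR _ * _)%:E); rewrite mulr0 mul0r addr0 mulrC.
under eq_integral do rewrite pw.
exact: (fubini_tonelli (m1 := P) (m2 := lebesgue_measure) F mF F0).
Qed.

End Mix.

End Gauss.

Section Main.
Variables (R : realType) (d : measure_display) (T : measurableType d).
Variables (P : probability T R) (n : nat) (v : T -> 'cV[R]_n) (Rv : 'M[R]_n).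
Variables (x : 'cV[R]_n).
Hypotheses (pR : psd Rv).
Hypothesis mv : forall i : 'I_n, measurable_fun setT (fun w => v w i ord0).
Hypothesis mgf : forall nu : 'cV[R]_n,
  (\int[P]_w (expR (dt nu (v w)))%:E <= (expR (2^-1 * qf Rv nu))%:E)%E.

Let y w := x + v w.

Definition mvec (f : T -> 'cV[R]_n) := forall i, measurable_fun setT (fun w => f w i 0).

Lemma mvec_y : mvec y.
Proof.
move=> i; rewrite /y.
under eq_fun do rewrite mxE.
by apply: measurable_funD => //; exact: mv.
Qed.

Lemma mvec_mul (A : 'M[R]_n) f : mvec f -> mvec (fun w => A *m f w).
Proof.
move=> mf i; under eq_fun do rewrite mxE.
apply: measurable_sum => j; apply: measurable_funM => //; exact: mf.
Qed.

Lemma mvec_cst (c : 'cV[R]_n) : mvec (fun _ => c).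
Proof. by move=> i. Qed.

Lemma meas_dt f g : mvec f -> mvec g -> measurable_fun setT (fun w => dt (f w) (g w)).
Proof.
move=> mf mg; under eq_fun do rewrite dtE.
apply: measurable_sum => j; apply: measurable_funM; [exact: mf|exact: mg].
Qed.

Lemma meas_qf (A : 'M[R]_n) : measurable_fun setT (fun w => qf A (y w)).
Proof.
under eq_fun do rewrite qfE.
apply: meas_dt; [exact: mvec_y|exact: mvec_mul mvec_y].
Qed.

Lemma meas_dty (c : 'cV[R]_n) : measurable_fun setT (fun w => dt c (y w)).
Proof. apply: meas_dt; [exact: mvec_cst|exact: mvec_y]. Qed.


Definition Bnd (A : 'M[R]_n) (m : 'cV[R]_n) (C : 'M[R]_n) :=
  exists K : R, [/\ 0 < K,
    K ^+ 2 * \det (1%:M - Rv *m A) = expR (dt x (A *m m)) &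
    forall nu : 'cV[R]_n,
      (\int[P]_w (expR (dt nu (y w) + 2^-1 * qf A (y w)))%:E
        <= (K * expR (dt nu m + 2^-1 * qf C nu))%:E)%E].

Lemma qf0 (z : 'cV[R]_n) : qf 0 z = 0.
Proof. by rewrite qfE mul0mx dt0r. Qed.

Lemma B0 : Bnd 0 x Rv.
Proof.
exists 1; split => //.
  by rewrite mulmx0 subr0 det1 mul0mx dt0r expR0 expr1n mulr1.
move=> nu.
under eq_integral do rewrite qf0 mulr0 addr0 /y dtDr expRD EFinM.
rewrite ge0_integralZl //.
  rewrite mul1r expRD EFinM; apply: lee_wpmul2l; first by rewrite lee_fin expR_ge0.
  exact: mgf.
apply/measurable_EFinP; apply: measurableT_comp; first exact: measurable_expR.
apply: meas_dt; [exact: mvec_cst|exact: mv].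
Qed.


Lemma Bstep A' a m' C' : AlgInv Rv x A' m' C' -> psd A' ->
  dt a (C' *m a) < 1 -> Bnd A' m' C' ->
  Bnd (A' + a *m a^T) (m' + (dt a m' / (1 - dt a (C' *m a))) *: (C' *m a))
      (C' + (1 - dt a (C' *m a))^-1 *: ((C' *m a) *m (C' *m a)^T)).
Proof.
move=> [sA sC hC hm dpos] pA al1 [K' [K'0 hK' hB]].
have ga0 : 0 < 1 - dt a (C' *m a) by rewrite subr_gt0.
have ga0' : 1 - dt a (C' *m a) != 0 by rewrite gt_eqF.
have uM : (1%:M - Rv *m A') \in unitmx by rewrite unitmxE unitfE gt_eqF.
have sq0 : 0 < Num.sqrt (1 - dt a (C' *m a)) by rewrite sqrtr_gt0.
exists (K' * (Num.sqrt (1 - dt a (C' *m a)))^-1 *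
        expR (2^-1 * (dt a m' ^+ 2 / (1 - dt a (C' *m a))))); split.
- by rewrite !mulr_gt0 // ?invr_gt0 // expR_gt0.
- rewrite (detMupd a (M' := 1%:M - Rv *m A') (erefl _) hC uM).
  rewrite (xAm pR.1 sA sC (erefl _) hC hm ga0') expRD -hK'.
  set al := dt a (C' *m a); set be := dt a m'.
  have eE : expR (2^-1 * (be ^+ 2 / (1 - al))) ^+ 2 = expR (be ^+ 2 / (1 - al)).
    by rewrite expr2 -expRD; congr expR; field.
  have eS : Num.sqrt (1 - al) ^+ 2 = 1 - al by rewrite sqr_sqrtr // ltW.
  rewrite !exprMn eE exprVn eS; field.
  by rewrite ga0'.
move=> nu.
set al := dt a (C' *m a); set be := dt a m'; set c := C' *m a.
set f1 := fun w => dt nu (y w) + 2^-1 * qf A' (y w).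
set f2 := fun w => dt a (y w).
have mf1 : measurable_fun setT f1.
  apply: measurable_funD; first exact: meas_dty.
  by apply: measurable_funM => //; exact: meas_qf.
have mf2 : measurable_fun setT f2 by exact: meas_dty.
have e1 w : dt nu (y w) + 2^-1 * qf (A' + a *m a^T) (y w) = f1 w + 2^-1 * f2 w ^+ 2.
  by rewrite qfD qf_rank1 /f1 /f2; ring.
under eq_integral do rewrite e1.
rewrite (mix P mf1 mf2).
set Phi0 := dt nu m' + 2^-1 * qf C' nu.
set B := be + dt c nu.
apply: (@le_trans _ _ (\int[lebesgue_measure]_g
   (K' * expR Phi0 * (expR (B * g + 2^-1 * al * g ^+ 2) * normal_pdf 0 1 g))%:E)%E).
  apply: ge0_le_integral => //.
  - move=> g _; apply: integral_ge0 => w _.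
    by rewrite lee_fin mulr_ge0 ?expR_ge0 ?normal_pdf_ge0.
  - exact: mix_meas.
  - apply/measurable_EFinP; apply: measurable_funM => //.
    apply: measurable_funM; last exact: measurable_normal_pdf.
    apply: measurableT_comp; first exact: measurable_expR.
    apply: measurable_funD; first by apply: measurable_funM.
    by apply: measurable_funM => //; exact: exprn_measurable.
  - move=> g _.
    have mexp : measurable_fun setT (fun w => expR (f1 w + g * f2 w)).
      apply: measurableT_comp; first exact: measurable_expR.
      by apply: measurable_funD => //; apply: measurable_funM.
    under eq_integral do rewrite EFinM.
    have mexpE : measurable_fun setT (fun w => (expR (f1 w + g * f2 w))%:E).
      by apply/measurable_EFinP.
    have pdf0 : (0 <= (normal_pdf 0 1 g)%:E)%E by rewrite lee_fin normal_pdf_ge0.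
    have ex0 : forall w, setT w -> (0 <= (expR (f1 w + g * f2 w))%:E)%E.
      by move=> w _; rewrite lee_fin expR_ge0.
    rewrite ge0_integralZr //.
    rewrite [X in (_ <= X)%E](_ : _ = (K' * expR (Phi0 + g * B + 2^-1 * al * g ^+ 2))%:E
        * (normal_pdf 0 1 g)%:E)%E; last first.
      rewrite -EFinM; congr EFin.
      have -> : Phi0 + g * B + 2^-1 * al * g ^+ 2 = Phi0 + (B * g + 2^-1 * al * g ^+ 2).
        by rewrite /Phi0; ring.
      by rewrite (expRD Phi0) !mulrA.
    apply: lee_wpmul2r; first by rewrite lee_fin normal_pdf_ge0.
    have e2 w : f1 w + g * f2 w = dt (nu + g *: a) (y w) + 2^-1 * qf A' (y w).
      by rewrite /f1 /f2 dtDl dtZl; ring.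
    under eq_integral do rewrite e2.
    apply: le_trans (hB (nu + g *: a)) _.
    by rewrite (@expo1 _ _ C' a m' sC) -/al -/be -/c -/Phi0.
have mg : measurable_fun setT
    (fun g : R => (expR (B * g + 2^-1 * al * g ^+ 2) * normal_pdf 0 1 g)%:E).
  apply/measurable_EFinP; apply: measurable_funM; last exact: measurable_normal_pdf.
  apply: measurableT_comp; first exact: measurable_expR.
  apply: measurable_funD; first by apply: measurable_funM.
  by apply: measurable_funM => //; exact: exprn_measurable.
have g0 : forall g, setT g -> (0 <= (expR (B * g + 2^-1 * al * g ^+ 2) * normal_pdf 0 1 g)%:E)%E.
  by move=> g _; rewrite lee_fin mulr_ge0 ?expR_ge0 ?normal_pdf_ge0.
have k0 : (0 <= (K' * expR Phi0)%:E)%E by rewrite lee_fin mulr_ge0 ?expR_ge0 // ltW.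
under eq_integral do rewrite EFinM.
rewrite ge0_integralZl // gauss1 // -EFinM lee_fin le_eqVlt; apply/orP; left; apply/eqP.
transitivity (K' * (Num.sqrt (1 - al))^-1 * expR (Phi0 + 2^-1 * (B ^+ 2 / (1 - al)))).
  by rewrite (expRD Phi0); ring.
have := @expo2 _ _ C' a m' ga0' nu; rewrite -/al -/be -/c -/Phi0 -/B => ->.
by rewrite (expRD (2^-1 * _)); ring.
Qed.

End Main.

Theorem lemma1 (R : realType) (d : measure_display) (T : measurableType d)
  (P : probability T R) (n : nat) (v : T -> 'cV[R]_n) (Rv : 'M[R]_n) :
  sym_psd Rv -> subgaussian P v Rv ->
  forall (H : 'M[R]_n) (x : 'cV[R]_n), sym_pd H ->
  ((Num.sqrt (\det (H + Rv)))^-1 %:E *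
     \int[P]_w (expR (2^-1 * qform (invmx (H + Rv)) (x + v w)))%:E
   <= ((Num.sqrt (\det H))^-1 * expR (2^-1 * qform (invmx H) x))%:E)%E.
Proof.
move=> [sR pR'] [mv [_ [_ mgf]]] H x [sH pH'].
have pR : psd Rv by split.
have pH : pd H by split.
have pS : pd (H + Rv) := pdS pH pR.
have uS := pd_unit pS.
have uH := pd_unit pH.
have dS := pd_det_gt0 pS.
have dH := pd_det_gt0 pH.
have [m [C [[_ _ _ hm _] [K [K0 hK hB]]]]] :=
  core pH pR (B0 x mv mgf) (fun A' a m' C' => @Bstep _ _ _ P _ v Rv x pR mv A' a m' C')
    (psd_inv pS) (fun u => lexx _).
set Si := invmx (H + Rv) in hm hK hB *.
have eM : 1%:M - Rv *m Si = H *m Si.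
  have h : (H + Rv) *m Si = 1%:M by rewrite mulmxV.
  by rewrite -h mulmxDl addrK.
rewrite eM in hm hK.
have hm' : Si *m m = invmx H *m x by rewrite -hm mulmxA mulKmx.
rewrite det_mulmx det_inv hm' -qfE in hK.
have hB0 := hB 0.
rewrite [qf C 0]qfE mulmx0 dt0r mulr0 addr0 dt0l expR0 mulr1 in hB0.
have eqI : (\int[P]_w (expR (dt 0 (x + v w) + 2^-1 * qf Si (x + v w)))%:E =
    \int[P]_w (expR (2^-1 * qform Si (x + v w)))%:E)%E.
  by apply: eq_integral => w _; rewrite dt0l add0r.
rewrite eqI in hB0.
have sS0 : 0 <= (Num.sqrt (\det (H + Rv)))^-1 by rewrite invr_ge0 sqrtr_ge0.
apply: le_trans (lee_wpmul2l _ hB0) _; first by rewrite lee_fin.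
rewrite -EFinM lee_fin le_eqVlt; apply/orP; left; apply/eqP.
apply/eqP; rewrite -(@eqrXn2 _ 2) //; last by rewrite mulr_ge0 // ltW.
apply/eqP.
change (qform (invmx H) x) with (qf (invmx H) x).
have eE : expR (2^-1 * qf (invmx H) x) ^+ 2 = expR (qf (invmx H) x).
  by rewrite expr2 -expRD; congr expR; field.
rewrite !exprMn eE !exprVn !sqr_sqrtr ?ltW // -hK.
have h1 : \det H != 0 by rewrite gt_eqF.
have h2 : \det (H + Rv) != 0 by rewrite gt_eqF.
by field; rewrite h1 h2.
Qed.
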